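(* Let $X$ be a rank-one subshift with cut sequence $(r_n)$ and spacer sequence $(s_{n,i})$, and suppose there are nonnegative integers $c<d$ such that for all sufficiently large $n$: $s_{n,r_n}=0$ and $s_{n,i}\in\{c,d\}$ for all $0\le i<r_n$, with both values occurring among $0\le i<r_n$. Then there exists a rank-one subshift generating the same language whose spacer sequence $(\tilde s_{n,i})$ (with the same cut sequence) satisfies, for all sufficiently large $n$, $\tilde s_{n,r_n}=0$ and $\tilde s_{n,i}\in\{0,d-c\}$ for all $0\le i<r_n$, with both values occurring.
   Context: A rank-one subshift with cut sequence $(r_n)_{n\ge1}$ (positive integers) and spacer sequence $(s_{n,i})_{n\ge1,\,0\le i\le r_n}$ (nonnegative integers) is defined by $B_1=0$, $B_{n+1}=B_n1^{s_{n,0}}B_n1^{s_{n,1}}\cdots B_n1^{s_{n,r_n}}$; it is the set of $x\in\{0,1\}^{\mathbb Z}$ all of whose finite subwords are subwords of some $B_n$. Its language is the set of finite words occurring in its elements. *)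

(* Defs.v *)
(* Symbols: 0 = false, 1 = true. *)
From mathcomp Require Import all_boot all_algebra.
Set Implicit Arguments. Unset Strict Implicit. Unset Printing Implicit Defensive.
Import GRing.Theory Num.Theory.

Definition rank_one_step (B : seq bool) (rn : nat) (sn : nat -> nat) : seq bool :=
  flatten [seq B ++ nseq (sn i) true | i <- iota 0 rn.+1].

(* rank_one_word r s n = B_n for n >= 1 (B_1 = 0); index 0 is a harmless
   duplicate of B_1. *)
Fixpoint rank_one_word (r : nat -> nat) (s : nat -> nat -> nat) (n : nat)
  : seq bool :=
  match n with
  | 0 => [:: false]
  | 1 => [:: false]
  | m.+1 => rank_one_step (rank_one_word r s m) (r m) (s m)
  end.

Definition window (x : int -> bool) (k : int) (l : nat) : seq bool :=
  mkseq (fun j => x (k + j%:Z)%R) l.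

Definition rank_one_subshift (r : nat -> nat) (s : nat -> nat -> nat)
  (x : int -> bool) : Prop :=
  forall (k : int) (l : nat), exists n, infix (window x k l) (rank_one_word r s n).

Definition rank_one_language (r : nat -> nat) (s : nat -> nat -> nat)
  (w : seq bool) : Prop :=
  exists x, rank_one_subshift r s x /\ exists k, window x k (size w) = w.

(* Main.v *)
Require Import Defs.
From mathcomp Require Import all_boot all_algebra.
From mathcomp Require Import zify.

Lemma word_S r s n : (1 <= n)%N ->
  rank_one_word r s n.+1 = rank_one_step (rank_one_word r s n) (r n) (s n).
Proof. by case: n. Qed.

Lemma step_prefix B rn sn :
  rank_one_step B rn sn = B ++ nseq (sn 0%N) true ++
     flatten [seq B ++ nseq (sn i) true | i <- iota 1 rn].
Proof. by rewrite /rank_one_step /= catA. Qed.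

Lemma step_ext B rn f g : (forall i, f i = g i) ->
  rank_one_step B rn f = rank_one_step B rn g.
Proof. by move=> h; rewrite /rank_one_step; congr flatten; apply: eq_map => i; rewrite h. Qed.

Lemma step_iota B rn sn : rank_one_step B rn sn =
  flatten [seq B ++ nseq (sn i) true | i <- iota 0 rn] ++ (B ++ nseq (sn rn) true).
Proof. by rewrite /rank_one_step -addn1 iotaD map_cat flatten_cat /= cats0. Qed.

Lemma step_addlast B rn sn c :
  rank_one_step B rn (fun i => if i == rn then sn i + c else sn i)%N =
  rank_one_step B rn sn ++ nseq c true.
Proof.
rewrite !step_iota eqxx nseqD -!catA; congr (flatten _ ++ _).
apply/eq_in_map => i; rewrite mem_iota add0n => /andP[_ hi].
by rewrite (ltn_eqF hi).
Qed.

Lemma step_shift B rn sn c : (forall i, (i < rn)%N -> (c <= sn i)%N) -> sn rn = 0%N ->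
  rank_one_step (B ++ nseq c true) rn (fun i => sn i - c)%N =
  rank_one_step B rn sn ++ nseq c true.
Proof.
move=> hc h0; rewrite !step_iota h0 sub0n cats0 /= -!catA; congr (flatten _ ++ _).
 apply/eq_in_map => i; rewrite mem_iota add0n => /andP[_ hi].
by rewrite -catA -nseqD subnKC // hc.
Qed.

Theorem proposition2 (r : nat -> nat) (s : nat -> nat -> nat)
  (r_pos : forall n, (1 <= n)%N -> (0 < r n)%N)
  (c d : nat) (hcd : (c < d)%N)
  (hs : exists N, forall n, (N <= n)%N ->
      s n (r n) = 0%N /\
      (forall i, (i < r n)%N -> s n i = c \/ s n i = d) /\
      (exists i, (i < r n)%N /\ s n i = c) /\
      (exists i, (i < r n)%N /\ s n i = d)) :
  exists s' : nat -> nat -> nat,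
    (forall w, rank_one_language r s' w <-> rank_one_language r s w) /\
    (exists N, forall n, (N <= n)%N ->
      s' n (r n) = 0%N /\
      (forall i, (i < r n)%N -> s' n i = 0%N \/ s' n i = (d - c)%N) /\
      (exists i, (i < r n)%N /\ s' n i = 0%N) /\
      (exists i, (i < r n)%N /\ s' n i = (d - c)%N)).
Proof.
case: hs => N0 hN0.
set M := N0.+1.
have hN : forall n, (M < n)%N -> s n (r n) = 0%N /\
      (forall i, (i < r n)%N -> s n i = c \/ s n i = d) /\
      (exists i, (i < r n)%N /\ s n i = c) /\
      (exists i, (i < r n)%N /\ s n i = d).
  by move=> n hn; apply: hN0; rewrite /M in hn; lia.
pose s' := fun n i => if (n < M)%N then s n i else if n == M then
   (if i == r n then s n i + c else s n i)%N else (s n i - c)%N.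
exists s'.
have hcle : forall n i, (M < n)%N -> (i < r n)%N -> (c <= s n i)%N.
  move=> n i hn hi; case: (hN n hn) => _ [h _]; case: (h i hi) => ->; lia.
have Elow : forall n, (n <= M)%N -> rank_one_word r s' n = rank_one_word r s n.
  elim=> [|n IH] hn //; case: n IH hn => [|n] IH hn //.
  rewrite [LHS]word_S // [RHS]word_S // IH; last by lia.
  by apply: step_ext => i; rewrite /s' ifT //.
have Ehigh : forall n, (M < n)%N ->
    rank_one_word r s' n = rank_one_word r s n ++ nseq c true.
  elim=> [|n IH] hn //; rewrite (word_S r s') ?(word_S r s); try lia.
  case: (ltngtP M n) => hMn; first 1 last.
  - lia.
  - subst n; rewrite Elow //; rewrite -step_addlast; apply: step_ext => i.
    by rewrite /s' ltnn eqxx.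
  rewrite IH //; rewrite -step_shift; first last.
  - by case: (hN n hMn).
  - by move=> i hi; apply: hcle.
  by apply: step_ext => i; rewrite /s' ltnNge (ltnW hMn) /= (gtn_eqF hMn).
have key : forall w, (exists n, infix w (rank_one_word r s' n)) <->
                     (exists n, infix w (rank_one_word r s n)).
  move=> w; split => -[n hw].
  - case: (leqP n M) => hn; first by exists n; rewrite -Elow.
    exists n.+1; rewrite word_S; last by lia.
    rewrite step_prefix; move: hw; rewrite Ehigh // => hw.
    have hc0 : (c <= s n 0)%N by apply: hcle => //; apply: r_pos; lia.
    rewrite -(subnKC hc0) nseqD -!catA catA.
    exact: infix_catr.
  - case: (leqP n M) => hn; first by exists n; rewrite Elow.
    by exists n; rewrite Ehigh //; apply: infix_catr.
have hsub : forall x, rank_one_subshift r s' x <-> rank_one_subshift r s x.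
  move=> x; split => h k l; apply/key; exact: h.
split.
  move=> w; split => -[x [hx hk]]; exists x; split => //.
    exact: (hsub x).1.
  exact: (hsub x).2.
exists M.+1 => n hn.
have hs'n : forall i, s' n i = (s n i - c)%N.
  by move=> i; rewrite /s' ltnNge (ltnW hn) /= (gtn_eqF hn).
case: (hN n hn) => [h0 [hcd' [[i [hi hic]] [j [hj hjd]]]]].
split; first by rewrite hs'n h0.
split; first by move=> k hk; rewrite hs'n; case: (hcd' k hk) => ->; [left; lia | right].
split; first by exists i; rewrite hs'n hic subnn.
by exists j; rewrite hs'n hjd.
Qed.
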